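(* For all integers $d\ge1$ and $k$ with $d+1\le k\le 2d$, $\theta^{\rm D}(k,d)=1$.
   Context: Fix integers $d\ge1$ and $1\le k\le 2d$. The directed $k$-neighbor graph ($k$-DnG) on $\mathbb{Z}^d$ is the random directed graph obtained by letting each vertex $x\in\mathbb{Z}^d$, independently of all other vertices, choose a uniformly random subset of exactly $k$ of its $2d$ nearest neighbors (in $\ell_1$-distance), and placing a directed edge from $x$ to each chosen neighbor. We write $\theta^{\rm D}(k,d)=\mathbb{P}(o\rightsquigarrow\infty \text{ in the $k$-DnG on }\mathbb{Z}^d)$, where $o$ is the origin and $o\rightsquigarrow\infty$ is the event that there is an infinite self-avoiding directed path along edges of the $k$-DnG starting at $o$. *)

(* Defs.v *)
From HB Require Import structures.
From mathcomp Require Import all_boot all_order all_algebra.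
From mathcomp Require Import all_classical all_reals all_analysis.
Set Implicit Arguments. Unset Strict Implicit. Unset Printing Implicit Defensive.
Import Order.TTheory GRing.Theory Num.Theory.

Definition site (d : nat) := {ffun 'I_d -> int}.
Definition origin (d : nat) : site d := [ffun _ => 0%R].

(* The 2d nearest-neighbour directions: (coordinate i, sign b);
   b = true means +e_i, b = false means -e_i. *)
Definition dir (d : nat) := ('I_d * bool)%type.

Definition step (d : nat) (x : site d) (e : dir d) : site d :=
  [ffun j => if j == e.1 then (x j + (if e.2 then 1 else -1))%R else x j].

Definition dedge (d : nat) (c : site d -> {set dir d}) (x y : site d) : Prop :=
  exists2 e, e \in c x & y = step x e.

Definition reaches_infinity (d : nat) (c : site d -> {set dir d}) (x : site d)
  : Prop :=
  exists p : nat -> site d,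
    [/\ p 0%N = x, injective p & forall n, dedge c (p n) (p n.+1)].

(* C is (the random configuration of) the k-DnG on Z^d under probability P:
   each C x is uniform on the k-subsets of the 2d neighbour directions,
   and the C x, x in Z^d, are mutually independent. *)
Local Open Scope classical_set_scope.
Definition is_kDnG {R : realType} (d k : nat) {dm : measure_display}
  {Omega : measurableType dm} (P : probability Omega R)
  (C : site d -> Omega -> {set dir d}) : Prop :=
  [/\ (forall (x : site d) (S : {set dir d}), measurable [set w : Omega | C x w = S]),
      (forall (x : site d) (w : Omega), #|C x w| = k),
      (forall (x : site d) (S : {set dir d}), #|S| = k ->
         P [set w | C x w = S] = ((('C(2 * d, k))%:R)^-1)%:E) &
      (forall (n : nat) (xs : 'I_n -> site d) (Ss : 'I_n -> {set dir d}),
         injective xs ->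
         P [set w | forall i : 'I_n, C (xs i) w = Ss i] =
         (\prod_(i < n) fine (P [set w | C (xs i) w = Ss i]))%:E)].

(* Main.v *)
Require Import Defs.
From HB Require Import structures.
From mathcomp Require Import all_boot all_order all_algebra.
From mathcomp Require Import all_classical all_reals all_analysis.
Local Open Scope classical_set_scope.

Import GRing.Theory.
Local Open Scope ring_scope.

Lemma has_pos (d : nat) (S : {set dir d}) :
  (d < #|S|)%N -> exists i, (i, true) \in S.
Proof.
move=> hS; apply/existsP; apply/negP => /existsP hn.
have sub : S \subset ((fun i : 'I_d => (i, false)) @: (finset.setT : {set 'I_d})).
  apply/fintype.subsetP => [[i b]] hib; case: b hib => hib.
    by exfalso; apply: hn; exists i.
  by apply/imsetP; exists i; rewrite ?in_setT.
have := subset_leq_card sub.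
have := leq_imset_card (fun i : 'I_d => (i, false)) (finset.setT : {set 'I_d}).
rewrite cardsT card_ord => h1 h2.
by move: (leq_trans h2 h1); rewrite leqNgt hS.
Qed.

Definition ssum (d : nat) (x : site d) : int := (\sum_(j < d) x j)%R.

Arguments ssum {d}.

Lemma ssum_step (d : nat) (x : site d) (i : 'I_d) :
  ssum (step x (i, true)) = (ssum x + 1)%R.
Proof.
rewrite /ssum.
have -> : (\sum_(j < d) step x (i, true) j = \sum_(j < d) (x j + (j == i)%:R))%R.
  apply: eq_bigr => j _; rewrite /step ffunE /=.
  by case: eqP => _; rewrite ?addr0.
rewrite big_split /=; congr (_ + _)%R.
rewrite (bigD1 i) //= eqxx big1 ?addr0 // => j /negPf ->; by [].
Qed.

Theorem lemma2p2 (R : realType) (d k : nat) (dm : measure_display)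
  (Omega : measurableType dm) (P : probability Omega R)
  (C : site d -> Omega -> {set dir d}) :
  (1 <= d)%N -> (d + 1 <= k)%N -> (k <= 2 * d)%N ->
  is_kDnG k P C ->
  ({ae P, forall w, reaches_infinity (fun x => C x w) (origin d)}).
Proof.
move=> _ hk _ [_ hcard _ _].
apply: aeW => w.
pose next (x : site d) : site d :=
  if [pick e in C x w | e.2] is Some e then step x e else x.
have hnext : forall x, exists2 e, (e \in C x w) && e.2 & next x = step x e.
  move=> x; rewrite /next; case: pickP => [e he | hn].
    by exists e.
  have [i hi] : exists i, (i, true) \in C x w.
    by apply: has_pos; rewrite hcard; rewrite addn1 in hk.
  by move: (hn (i, true)); rewrite hi.
pose p n := iter n next (origin d).
have hs : forall n, ssum (p n) = n%:R%R.
  elim => [|n IH].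
    by rewrite /p /= /ssum big1 // => j _; rewrite ffunE.
  rewrite /p iterS -/(p n).
  have [[i b] /andP [_ /= hb] ->] := hnext (p n).
  by rewrite hb ssum_step IH -natr1.
exists p; split => //.
  move=> m n /(congr1 (@ssum d)); rewrite !hs.
  move/eqP; rewrite Num.Theory.eqr_nat; move/eqP; exact.
move=> n; rewrite /p iterS -/(p n).
have [e /andP [he _] ->] := hnext (p n).
by exists e.
Qed.
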